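(* Let $(\mathsf P,\mathcal O)$ be a semitopology. The following are equivalent: (1) every point $p\in\mathsf P$ is regular; (2) $\mathsf P$ partitions into topen sets: there is a set $\mathcal T$ of pairwise disjoint topen sets with $\bigcup\mathcal T=\mathsf P$; (3) every $X\subseteq\mathsf P$ has a cover by topen sets: there is a set $\mathcal T$ of topen sets with $X\subseteq\bigcup\mathcal T$.
   Context: A semitopology is a pair $(\mathsf P,\mathcal O)$ where $\mathsf P$ is a set and $\mathcal O\subseteq\mathcal P(\mathsf P)$ contains $\varnothing$ and $\mathsf P$ and is closed under arbitrary unions. Write $X\between Y$ when $X\cap Y\neq\varnothing$. A set $T$ is transitive when for all $O,O'\in\mathcal O$, $O\between T\between O'$ implies $O\between O'$; topen means nonempty, open and transitive. Points $p,p'$ are intertwined when every open set containing $p$ intersects every open set containing $p'$; $I(p)$ is the set of points intertwined with $p$; $K(p)=\mathrm{int}(I(p))$ (the union of all open subsets of $I(p)$) is the community of $p$. A point $p$ is regular when $p\in K(p)$ and $K(p)$ is topen. *)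

(* Defs.v *)
Set Implicit Arguments.

Definition set (P : Type) := P -> Prop.

Record semitopology (P : Type) := {
  opn : set P -> Prop;
  opn_empty : opn (fun _ => False);
  opn_full : opn (fun _ => True);
  opn_union : forall (F : set P -> Prop),
      (forall O, F O -> opn O) -> opn (fun x => exists O, F O /\ O x)
}.

Section Defs.
Context {P : Type} (S : semitopology P).

Definition between (X Y : set P) : Prop := exists x, X x /\ Y x.

Definition subset (X Y : set P) : Prop := forall x, X x -> Y x.

Definition transitive (T : set P) : Prop :=
  forall O O', opn S O -> opn S O' -> between O T -> between T O' -> between O O'.

Definition topen (T : set P) : Prop :=
  (exists x, T x) /\ opn S T /\ transitive T.

Definition intertwined (p p' : P) : Prop :=
  forall O O', opn S O -> opn S O' -> O p -> O' p' -> between O O'.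

Definition I (p : P) : set P := fun p' => intertwined p p'.

Definition interior (X : set P) : set P :=
  fun x => exists O, opn S O /\ subset O X /\ O x.

Definition K (p : P) : set P := interior (I p).

Definition regular (p : P) : Prop := K p p /\ topen (K p).

Definition bigcup (T : set P -> Prop) : set P := fun x => exists X, T X /\ X x.

End Defs.

(* Main.v *)
Require Import Defs.
From Stdlib Require Import FunctionalExtensionality PropExtensionality.

Section H.
Context {P : Type} (S : semitopology P).

Lemma lemA (T : set P) (a b : P) : opn S T -> transitive S T -> T a -> T b ->
  intertwined S a b.
Proof.
  intros HT Htr Ha Hb O O' HO HO' Oa O'b.
  apply (Htr O O' HO HO'); [exists a | exists b]; auto.
Qed.

Lemma lemB (T : set P) (p : P) : topen S T -> T p -> subset T (K S p).
Proof.
  intros [_ [Ho Htr]] Hp x Hx. exists T. repeat split; auto.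
  intros y Hy. unfold I. exact (lemA T p y Ho Htr Hp Hy).
Qed.

Lemma K_open (p : P) : opn S (K S p).
Proof.
  pose proof (opn_union S (fun O => opn S O /\ subset O (I S p))) as H.
  assert (E : (fun x => exists O, (opn S O /\ subset O (I S p)) /\ O x) = K S p).
  { apply functional_extensionality; intro x; apply propositional_extensionality.
    unfold K, interior; split.
    - intros [O [[a b] c]]; exists O; auto.
    - intros [O [a [b c]]]; exists O; auto. }
  rewrite <- E. apply H. intros O [h _]; exact h.
Qed.

Lemma reg_of_topen (p : P) (Y : set P) : topen S Y -> Y p -> regular S p.
Proof.
  intros HY Hp. split.
  - apply (lemB Y p HY Hp); auto.
  - split; [| split].
    + exists p. apply (lemB Y p HY Hp); auto.
    + apply K_open.
    + destruct HY as [_ [Yo Ytr]].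
      intros O O' HO HO' [z [Oz Kz]] [w [Kw O'w]].
      destruct Kz as [Oz' [_ [Sz Zz]]]. destruct Kw as [Ow' [_ [Sw Ww]]].
      apply (Ytr O O' HO HO').
      * destruct (Sz z Zz Y O Yo HO Hp Oz) as [u [Yu Ou]]. exists u; auto.
      * apply (Sw w Ww Y O' Yo HO' Hp O'w).
Qed.

Lemma Keq (p q : P) : regular S p -> regular S q -> between (K S p) (K S q) ->
  K S p = K S q.
Proof.
  intros Hp Hq [x [Hxp Hxq]].
  assert (Hx : regular S x).
  { apply (reg_of_topen _ _ (proj2 Hp) Hxp). }
  assert (G : forall r, regular S r -> K S r x -> K S r = K S x).
  { intros r Hr Hrx.
    assert (s1 : subset (K S r) (K S x)) by apply (lemB _ _ (proj2 Hr) Hrx).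
    assert (s2 : subset (K S x) (K S r)).
    { apply (lemB _ _ (proj2 Hx)). apply s1. apply (proj1 Hr). }
    apply functional_extensionality; intro y; apply propositional_extensionality.
    split; auto. }
  rewrite (G p Hp Hxp), (G q Hq Hxq). reflexivity.
Qed.

End H.

Theorem corollary4p19 (P : Type) (S : semitopology P) :
  ((forall p : P, regular S p) <->
   (exists T : set P -> Prop,
      (forall X, T X -> topen S X) /\
      (forall X Y, T X -> T Y -> X <> Y -> ~ between X Y) /\
      (forall x : P, bigcup T x)))
  /\
  ((exists T : set P -> Prop,
      (forall X, T X -> topen S X) /\
      (forall X Y, T X -> T Y -> X <> Y -> ~ between X Y) /\
      (forall x : P, bigcup T x)) <->
   (forall X : set P, exists T : set P -> Prop,
      (forall Y, T Y -> topen S Y) /\ subset X (bigcup T))).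
Proof.
  assert (h12 : (forall p : P, regular S p) ->
   (exists T : set P -> Prop,
      (forall X, T X -> topen S X) /\
      (forall X Y, T X -> T Y -> X <> Y -> ~ between X Y) /\
      (forall x : P, bigcup T x))).
  { intros Hr. exists (fun X => exists p, X = K S p). split; [|split].
    - intros X [p ->]. apply (proj2 (Hr p)).
    - intros X Y [p ->] [q ->] Hne Hb. apply Hne. apply Keq with (S:=S); auto.
    - intros x. exists (K S x). split; [exists x; auto | apply (proj1 (Hr x))]. }
  assert (h23 : (exists T : set P -> Prop,
      (forall X, T X -> topen S X) /\
      (forall X Y, T X -> T Y -> X <> Y -> ~ between X Y) /\
      (forall x : P, bigcup T x)) ->
   (forall X : set P, exists T : set P -> Prop,
      (forall Y, T Y -> topen S Y) /\ subset X (bigcup T))).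
  { intros [T [A [_ C]]] X. exists T. split; auto. intros x _. apply C. }
  assert (h31 : (forall X : set P, exists T : set P -> Prop,
      (forall Y, T Y -> topen S Y) /\ subset X (bigcup T)) ->
      (forall p : P, regular S p)).
  { intros H p. destruct (H (fun _ => True)) as [T [A B]].
    destruct (B p Logic.I) as [Y [TY Yp]]. apply (reg_of_topen S _ _ (A Y TY) Yp). }
  split; split; auto.
Qed.
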